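(* Let $p$ be a prime and let $(G,H,T)$ be an RCC loop folder of order $p$ with $\langle T\rangle=G$. Then $G$ is abelian.
   Context: A loop folder is a triple $(G,H,T)$ with $G$ a finite group, $H\le G$, and $T\subseteq G$ with $1\in T$ such that $T$ is a set of representatives for the right cosets $H^g\backslash G$ for every $g\in G$. It is an RCC loop folder if moreover $T$ is invariant under conjugation by $G$. Its order is $|T|$. *)

(* Defs.v *)
From mathcomp Require Import all_boot all_fingroup.
Set Implicit Arguments. Unset Strict Implicit. Unset Printing Implicit Defensive.
Local Open Scope group_scope.

Definition right_transversal (gT : finGroupType) (G H : {set gT}) (T : {set gT}) :=
  T \subset G /\ forall x, x \in G -> #|(H :* x) :&: T| = 1%N.

Definition loop_folder (gT : finGroupType) (G H : {group gT}) (T : {set gT}) :=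
  [/\ H \subset G, 1 \in T &
      forall g, g \in G -> right_transversal G (H :^ g) T].

Definition RCC_loop_folder (gT : finGroupType) (G H : {group gT}) (T : {set gT}) :=
  loop_folder G H T /\ forall g, g \in G -> T :^ g = T.

(* Main.v *)
Require Import Defs.
From mathcomp Require Import all_boot all_fingroup zify.
Local Open Scope group_scope.

Set Implicit Arguments. Unset Strict Implicit.

Lemma uniqT (gT : finGroupType) (G H : {group gT}) (T : {set gT}) :
  (forall x, x \in G -> #|(H :* x) :&: T| = 1%N) ->
  forall x s r, x \in G -> s \in T -> r \in T -> s * x^-1 \in H -> r * x^-1 \in H -> s = r.
Proof.
move=> tr x s r xG sT rT sH rH.
have /eqP/cards1P[a Ha] := tr x xG.
have : s \in (H :* x) :&: T by rewrite inE mem_rcoset sH.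
have : r \in (H :* x) :&: T by rewrite inE mem_rcoset rH.
by rewrite Ha !inE => /eqP -> /eqP ->.
Qed.

Lemma existT (gT : finGroupType) (G H : {group gT}) (T : {set gT}) :
  (forall x, x \in G -> #|(H :* x) :&: T| = 1%N) ->
  forall x, x \in G -> exists2 u, u \in T & x * u^-1 \in H.
Proof.
move=> tr x xG.
have /eqP/cards1P[a Ha] := tr x xG.
have : a \in (H :* x) :&: T by rewrite Ha set11.
rewrite inE mem_rcoset => /andP[aH aT]; exists a => //.
by rewrite -(invgK (x * a^-1)) invMg invgK groupV.
Qed.

Lemma card_disj (T : finType) (A B : {set T}) : A :&: B = set0 -> #|A :|: B| = #|A| + #|B|.
Proof. by move=> AB; rewrite -cardsUI AB cards0 addn0. Qed.

Lemma key (gT : finGroupType) (p : nat) (G H : {group gT}) (T : {set gT}) :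
  prime p -> H \subset G -> 1 \in T -> T \subset G ->
  (forall x, x \in G -> #|(H :* x) :&: T| = 1%N) ->
  (forall g, g \in G -> T :^ g = T) -> #|T| = p ->
  forall t, t \in T -> t != 1 -> T \subset 'C[t].
Proof.
move=> pr HG T1 TG tr Tn cT.
have uq := uniqT tr.
have P2 : forall u, u \in T -> u \in H -> u = 1.
  move=> u uT uH; apply: (uq 1) => //; by rewrite ?invg1 ?mulg1.
have P2' : forall s r, s \in T -> r \in T -> s * r^-1 \in H -> s = r.
  move=> s r sT rT sr; apply: (uq r) => //; first exact: (subsetP TG).
  by rewrite mulgV group1.
have iGH : #|G : H| = p.
  rewrite -cT /indexg.
  have -> : rcosets H G = [set H :* u | u in T].
    apply/setP=> X; apply/imsetP/imsetP => [[x xG ->]|[u uT ->]].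
      have [u uT xu] := existT tr xG; exists u => //.
      rewrite rcosetE; apply/rcoset_eqP; by rewrite mem_rcoset.
    by exists u; [exact: (subsetP TG)| rewrite rcosetE].
  apply: card_in_imset => u v uT vT e.
  apply: P2' => //; rewrite -mem_rcoset; rewrite -e; exact: rcoset_refl.
have cardG : #|G| = (#|H| * p)%N by rewrite -iGH Lagrange.
have P3 : forall u, u \in T -> u != 1 -> #|G : 'C_G[u]| < p.
  move=> u uT u1; rewrite index_cent1.
  have : u ^: G \subset T :\ 1.
    apply/subsetP => x /imsetP[g gG ->].
    by rewrite !inE conjg_eq1 u1 -(Tn g gG) memJ_conjg.
  move/subset_leq_card; rewrite -cT (cardsD1 1 T) T1 /=.
  by rewrite add1n ltnS.
have P4 : forall u, u \in T -> u != 1 -> #|'C_G[u] : 'C_G[u] :&: H| = p.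
  move=> u uT u1.
  set C := 'C_G[u].
  have CG : C \subset G by exact: subsetIl.
  have e1 := Lagrange_index CG (subsetIl C H).
  have e2 := Lagrange_index HG (subsetIr C H).
  rewrite -e2 iGH in e1.
  have dv : p %| #|G : C| * #|C : C :&: H| by rewrite e1 dvdn_mulr.
  rewrite Euclid_dvdM // gtnNdvd ?indexg_gt0 ?P3 //= in dv.
  apply/eqP; rewrite eqn_leq andbC dvdn_leq ?indexg_gt0 //=.
  have := mul_cardG C H.
  have : #|(C * H)%g| <= #|G| by apply: subset_leq_card; apply: mul_subG.
  rewrite cardG -(Lagrange (subsetIl C H)) => le e.
  have : #|C :&: H| * #|C : C :&: H| * #|H| <= #|H| * p * #|C :&: H|.
    by rewrite e leq_mul2r le orbT.
  have a0 : 0 < #|C :&: H| by rewrite cardG_gt0.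
  have b0 : 0 < #|H| by rewrite cardG_gt0.
  move=> h; rewrite -(@leq_pmul2r (#|C :&: H| * #|H|)) ?muln_gt0 ?a0 //.
  move: h; rewrite /= -/C.
  nia.
have P5 : forall u, u \in T -> H :&: H :^ u \subset 'C[u].
  move=> u uT; apply/subsetP => c; rewrite inE => /andP[cH cHu].
  have cG : c \in G := subsetP HG c cH.
  have e : u ^ c = u.
    apply: P2' => //; first by rewrite -(Tn c cG) memJ_conjg.
    rewrite mem_conjg in cHu.
    have : c^-1 * (c ^ u^-1) \in H by rewrite groupM ?groupV.
    by rewrite /conjg invgK !mulgA.
  apply/cent1P; rewrite /commute -{1}e /conjg mulKVg //.
have P6 : forall u, u \in T -> u != 1 -> forall x, x \in G -> 'C_G[u] :&: H \subset H :^ x.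
  move=> u uT u1 x xG.
  pose C := 'C_G[u]%G.
  pose B := (C :&: H)%G.
  have uB : u \notin B.
    apply/negP; rewrite inE => /andP[_ uH]; by move: u1; rewrite (P2 u uT uH) eqxx.
  have uC : u \in C by rewrite inE (subsetP TG) // cent1id.
  pose M := (<[u]> <*> B)%G.
  have BM : B \subset M := joing_subr _ _.
  have MC : M \subset C by rewrite join_subG cycle_subG uC subsetIl.
  have e := Lagrange_index MC BM.
  rewrite (P4 u uT u1) in e.
  have MB1 : #|M : B| != 1%N.
    rewrite indexg_eq1; apply/negP => /subsetP h; move/negP: uB; apply; apply: h.
    apply: (subsetP (joing_subl _ _)); exact: cycle_id.
  have MBp : #|M : B| = p by apply/(prime_nt_dvdP pr MB1); rewrite -e dvdn_mull.
  have CM : C \subset M.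
    rewrite -indexg_eq1; rewrite MBp in e.
    have p0 : 0 < p by exact: prime_gt0.
    by move: e; rewrite -{2}(mul1n p) => /eqP; rewrite eqn_pmul2r.
  have MN : M \subset 'N(B).
    rewrite join_subG normG andbT cycle_subG; apply: (subsetP (cent_sub B)).
    rewrite -sub_cent1; apply: subset_trans (subsetIl _ _) (subsetIr G _).
  have CN := subset_trans CM MN.
  have HC : (H * C)%g = G.
    apply/eqP; rewrite eqEcard mul_subG ?subsetIl //=.
    have e1 := mul_cardG H C.
    have e2 := Lagrange (subsetIl C H).
    rewrite (P4 u uT u1) in e2.
    rewrite setIC in e1.
    have b0 : 0 < #|B| by rewrite cardG_gt0.
    rewrite cardG.
    have : (#|(H * C)%g| * #|C :&: H| = #|H| * p * #|C :&: H|)%N.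
      by rewrite -e1 -e2 mulnA mulnAC.
    move/eqP; rewrite eqn_pmul2r // => /eqP ->; by [].
  rewrite -HC in xG; case/mulsgP: xG => h c hH cC ->.
  rewrite conjsgM (conjGid hH) -(normP (subsetP CN c cC)) conjSg; exact: subsetIr.
move=> t tT t1.
have tG : t \in G := subsetP TG t tT.
pose K := ('C_G[t] :&: H)%G.
have KH : K \subset H := subsetIr _ _.
have Pb : forall v, v \in T -> v != 1 -> 'C_G[v] :&: H \subset K.
  move=> v vT v1; rewrite subsetI subsetIr andbT.
  have h1 : 'C_G[v] :&: H \subset H :&: H :^ t by rewrite subsetI subsetIr P6.
  rewrite subsetI (subset_trans (subsetIl _ _) (subsetIl G _)) /=.
  exact: subset_trans h1 (P5 t tT).
have Pc : forall u, u \in T -> u != 1 -> H :&: H :^ u \subset K.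
  move=> u uT u1; apply: subset_trans (Pb u uT u1).
  rewrite subsetI subsetIl andbT subsetI (subset_trans (subsetIl _ _) HG) /=.
  exact: P5.
apply/subsetP => r rT; apply/negPn/negP => rC.
have rG : r \in G := subsetP TG r rT.
pose I := [set x.1 ^ x.2 | x in setX (H :\: K) T].
have injI : {in setX (H :\: K) T &, injective (fun x => x.1 ^ x.2)}.
  move=> [h s] [h' s']; rewrite !in_setX !in_setD /= => /andP[/andP[hK hH] sT] /andP[/andP[h'K h'H] s'T] e.
  have [ss|ns] := eqVneq s s'.
    by subst; rewrite (conjg_inj _ e).
  exfalso.
  have sG : s \in G := subsetP TG s sT.
  have s'G : s' \in G := subsetP TG s' s'T.
  have [u uT yu] := existT tr (groupM sG (groupVr s'G)).
  have u1 : u != 1.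
    apply/eqP => u1; move: yu; rewrite u1 invg1 mulg1 => yu.
    by rewrite (P2' s s' sT s'T yu) eqxx in ns.
  have e2 : h' = (h ^ (s * s'^-1 * u^-1)) ^ u.
    by rewrite -conjgM mulgKV conjgM e conjgK.
  have : h' \in H :&: H :^ u by rewrite in_setI h'H e2 memJ_conjg groupJ.
  by move/(subsetP (Pc u uT u1)); rewrite (negbTE h'K).
have cI : #|I| = (#|H :\: K| * p)%N by rewrite card_in_imset // cardsX cT.
have cHK : #|H :\: K| = (#|H| - #|K|)%N by rewrite cardsD (setIidPr KH).
have cC : #|'C_G[t]| = (#|K| * p)%N.
  by rewrite -(P4 t tT t1) (Lagrange (subsetIl _ _ : K \subset 'C_G[t])).
have d1 : 'C_G[t] :&: I = set0.
  apply/setP => z; rewrite in_setI in_set0.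
  case/boolP: (z \in I) => [/imsetP[[h s]] |]; last by rewrite andbF.
  rewrite in_setX in_setD /= => /andP[/andP[hK hH] sT] ->; rewrite andbT.
  apply/negP; rewrite in_setI => /andP[_ hC].
  have sG : s \in G := subsetP TG s sT.
  have vT : t ^ s^-1 \in T by rewrite -(Tn s^-1 (groupVr sG)) memJ_conjg.
  have v1 : t ^ s^-1 != 1 by rewrite conjg_eq1.
  have hv : h \in 'C_G[t ^ s^-1] :&: H.
    by rewrite in_setI hH andbT in_setI (subsetP HG) // cent1J mem_conjgV.
  by move/(subsetP (Pb _ vT v1)): hv; rewrite (negbTE hK).
have d2 : ('C_G[t] :|: I) :&: [set r] = set0.
  apply/setP => z; rewrite in_setI in_set1 in_set0.
  case: eqP => [->|]; rewrite ?andbF ?andbT //.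
  apply/negbTE; rewrite in_setU negb_or; apply/andP; split.
    by rewrite in_setI negb_and rC orbT.
  apply/negP => /imsetP[[h s]]; rewrite in_setX in_setD /= => /andP[/andP[hK hH] sT] rE.
  have r1 : r != 1 by apply/eqP => r1; move: rC; rewrite r1 group1.
  have sG : s \in G := subsetP TG s sT.
  have vT : r ^ s^-1 \in T by rewrite -(Tn s^-1 (groupVr sG)) memJ_conjg.
  have vH : r ^ s^-1 \in H by rewrite rE conjgK.
  by move: r1; rewrite -(conjg_eq1 r s^-1) (P2 _ vT vH) eqxx.
have : #|('C_G[t] :|: I) :|: [set r]| <= #|G|.
  apply: subset_leq_card; rewrite !subUset subsetIl sub1set rG andbT /=.
  apply/subsetP => z /imsetP[[h s]]; rewrite in_setX in_setD /= => /andP[/andP[_ hH] sT] ->.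
  by apply: groupJ; [apply: (subsetP HG) | apply: (subsetP TG)].
rewrite card_disj // card_disj // cards1 cI cHK cC cardG.
have kp : (#|K| * p <= #|H| * p)%N by rewrite leq_mul2r subset_leq_card ?orbT.
rewrite mulnBl. lia.
Qed.

Theorem proposition4p3 (gT : finGroupType) (p : nat) (G H : {group gT}) (T : {set gT}) :
  prime p -> RCC_loop_folder G H T -> #|T| = p -> <<T>> = G -> abelian G.
Proof.
move=> pr [[HG T1 tr] Tn] cT genT.
have [TG trH] := tr 1 (group1 G).
rewrite conjsg1 in trH.
rewrite -genT abelian_gen /abelian; apply/subsetP => y yT; rewrite -sub_cent1.
have [-> | y1] := eqVneq y 1.
  by apply/subsetP => x _; apply/cent1P; rewrite /commute mulg1 mul1g.
exact: (key pr HG T1 TG trH Tn cT yT y1).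
Qed.
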